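(* Let $X$ be a set with $n\ge1$ elements and $\lambda_n=|\mathfrak{P}(X)|$. Then $$\lambda_n=\sum_{k=1}^{n}\alpha_{n,k}\left(\sum_{\ell=0}^{\lfloor k/3\rfloor}\beta_{k,\ell}\,3^{\ell}\right),\qquad \beta_{k,\ell}=\frac{k!}{6^{\ell}\,\ell!\,(k-3\ell)!},$$ where $\alpha_{n,k}$ is the Stirling number of the second kind (number of partitions of an $n$-set into $k$ blocks) and $\beta_{k,\ell}$ is the number of partitions of a $k$-element set into $\ell$ blocks of size $3$ and $k-3\ell$ blocks of size $1$.
   Context: A set pair system on a finite set $X$ is a set of ordered pairs $(S,H)$ of subsets of $X$ with $S\ne\emptyset$ and $S\cap H=\emptyset$. A polestar system is a set pair system $\mathcal{S}$ with (PL1) $\{S:(S,H)\in\mathcal{S}\}$ is a partition of $X$; (PL2) distinct $(S,H),(S',H')\in\mathcal{S}$ have $S\ne S'$; (PL3) for each $(S,H)\in\mathcal{S}$ with $H\ne\emptyset$, $(H,\emptyset)\in\mathcal{S}$ and there is exactly one $(S',H')\in\mathcal{S}$ with $(S',H')\ne(S,H)$ and $H'=H$. $\mathfrak{P}(X)$ is the set of polestar systems on $X$. *)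

(* Defs.v *)
From mathcomp Require Import all_boot.
Set Implicit Arguments. Unset Strict Implicit. Unset Printing Implicit Defensive.

Definition set_pair_system (X : finType) (Sys : {set {set X} * {set X}}) : bool :=
  [forall p in Sys, (p.1 != set0) && [disjoint p.1 & p.2]].

Definition PL1 (X : finType) (Sys : {set {set X} * {set X}}) : bool :=
  partition [set p.1 | p in Sys] [set: X].

Definition PL2 (X : finType) (Sys : {set {set X} * {set X}}) : bool :=
  [forall p in Sys, forall q in Sys, (p != q) ==> (p.1 != q.1)].

Definition PL3 (X : finType) (Sys : {set {set X} * {set X}}) : bool :=
  [forall p in Sys, (p.2 != set0) ==>
    (((p.2, set0) \in Sys) &&
     (#|[set q in Sys | (q != p) && (q.2 == p.2)]| == 1))].

Definition polestar_system (X : finType) (Sys : {set {set X} * {set X}}) : bool :=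
  [&& set_pair_system Sys, PL1 Sys, PL2 Sys & PL3 Sys].

Definition num_polestar (X : finType) : nat :=
  #|[set Sys : {set {set X} * {set X}} | polestar_system Sys ]|.

Definition alpha (n k : nat) : nat :=
  #|[set P : {set {set 'I_n}} | partition P [set: 'I_n] && (#|P| == k)]|.

(* beta_{k,l} = k! / (6^l l! (k-3l)!)  (an exact division for 3l <= k) *)
Definition beta (k l : nat) : nat :=
  k`! %/ (6 ^ l * l`! * (k - 3 * l)`!).

(* Main.v *)
Require Import Defs.
From mathcomp Require Import all_boot.
From mathcomp Require Import zify.
Set Implicit Arguments. Unset Strict Implicit. Unset Printing Implicit Defensive.

Definition M (l : nat) := \prod_(i < l) 'C((3*i).+2, 2).
Definition b (k l : nat) := 'C(k, 3 * l) * M l.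

Lemma bin2_mul2 n : 'C(n.+2, 2) * 2 = n.+2 * n.+1.
Proof.
have := mul_bin_diag n.+2 1. rewrite /= bin1 => H.
by rewrite mulnC -H mulnC.
Qed.

Lemma fact3 l : (3 * l)`! = 6 ^ l * l`! * M l.
Proof.
elim: l => [|l IH]; first by rewrite /M big_ord0.
rewrite /M big_ord_recr /= -/(M l).
have -> : 3 * l.+1 = (3 * l).+3 by lia.
rewrite !factS IH expnS.
have H := bin2_mul2 (3 * l).
have -> : (3 * l).+3 * ((3 * l).+2 * ((3 * l).+1 * (6 ^ l * l`! * M l)))
   = 3 * l.+1 * (('C((3 * l).+2, 2) * 2)) * (6 ^ l * l`! * M l).
  rewrite H. lia.
lia.
Qed.

Lemma beta_b k l : 3 * l <= k -> k`! %/ (6 ^ l * l`! * (k - 3 * l)`!) = b k l.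
Proof.
move=> h; rewrite -(bin_fact h) fact3 /b.
have -> : 'C(k, 3 * l) * (6 ^ l * l`! * M l * (k - 3 * l)`!)
   = 'C(k, 3 * l) * M l * (6 ^ l * l`! * (k - 3 * l)`!) by lia.
by rewrite mulnK // !muln_gt0 expn_gt0 /= !fact_gt0.
Qed.

Lemma bin_sub2 k j : 'C(k, j.+2) * 'C(j.+2, 2) = 'C(k, 2) * 'C(k - 2, j).
Proof.
case: (ltnP k j.+2) => hk.
  rewrite bin_small //. case: (ltnP k 2) => h2; first by rewrite (bin_small h2).
  rewrite (bin_small (n:=k-2)) ?muln0 //; lia.
have hk2 : 2 <= k by lia.
have hj : j <= k - 2 by lia.
apply/eqP; rewrite -(eqn_pmul2r (fact_gt0 (k - j.+2))).
rewrite -(eqn_pmul2r (fact_gt0 j)) -(eqn_pmul2r (fact_gt0 2)).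
have e1 := bin_fact hk. have e2 := bin_fact hk2. have e3 := bin_fact hj.
have e4 := @bin_fact j.+2 2 (isT : 2 <= j.+2).
have e5 : (j.+2 - 2) = j by lia.
have e6 : (k - 2 - j) = k - j.+2 by lia.
rewrite e5 in e4. rewrite e6 in e3.
apply/eqP.
transitivity ('C(k, j.+2) * ('C(j.+2, 2) * (2`! * j`!)) * (k - j.+2)`!); first by lia.
rewrite e4.
transitivity ('C(k, 2) * 2`! * ('C(k - 2, j) * (j`! * (k - j.+2)`!))); last by lia.
rewrite e3. 
transitivity ('C(k, j.+2) * ((j.+2)`! * (k - j.+2)`!)); first by lia.
rewrite e1. rewrite -e2. lia.
Qed.

Definition Ssum (k : nat) := \sum_(0 <= l < (k %/ 3).+1) b k l * 3 ^ l.

Lemma b_small k l : k %/ 3 < l -> b k l = 0.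
Proof.
move=> h; rewrite /b bin_small //.
have := leq_divM k 3.
move: h; rewrite ltn_divLR //; lia.
Qed.

Lemma S_widen k N : k %/ 3 < N -> \sum_(0 <= l < N) b k l * 3 ^ l = Ssum k.
Proof.
move=> h; rewrite /Ssum (big_cat_nat _ (n := (k %/ 3).+1)) //=.
rewrite [X in _ + X]big_nat_cond [X in _ + X]big1 ?addn0 //.
by move=> i /andP[/andP[h1 _] _]; rewrite b_small.
Qed.

Lemma b_k0 k : b k 0 = 1.
Proof. by rewrite /b muln0 bin0 /M big_ord0. Qed.

Lemma b_rec k l : b k.+1 l.+1 = b k l.+1 + 'C(k, 2) * b (k - 2) l.
Proof.
rewrite /b /M big_ord_recr /= -/(M l).
have -> : 3 * l.+1 = (3 * l).+3 by lia.
rewrite binS mulnDl; congr (_ + _).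
rewrite mulnA mulnAC bin_sub2. lia.
Qed.

Lemma S_rec k : Ssum k.+1 = Ssum k + 3 * 'C(k, 2) * Ssum (k - 2).
Proof.
have hN : forall j, j <= k.+1 -> j %/ 3 < k.+2.
  move=> j hj; apply: leq_ltn_trans (leq_div _ _) _; lia.
rewrite -(S_widen (N := k.+3)); last by apply: leq_trans (hN _ (leqnn _)) _.
rewrite -(S_widen (N := k.+3) (k := k)); last by apply: leq_trans (hN _ (leqnSn _)) _.
rewrite -(S_widen (N := k.+2) (k := k - 2)); last by apply: hN; lia.
rewrite [LHS]big_nat_recl // [X in _ = X + _]big_nat_recl // !b_k0 !expn0 !muln1.
rewrite big_nat_cond.
under eq_bigr => i _ do rewrite b_rec mulnDl.
rewrite big_split /= -big_nat_cond -addnA; congr (_ + _).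
congr (_ + _).
rewrite -big_nat_cond big_distrr /=; apply: eq_bigr => i _; rewrite expnS; lia.
Qed.

Section Gen.
Variables (T : finType) (e : T).

Definition valid (A : {set T}) (f : {ffun T -> T}) : bool :=
  [forall t, ((t \notin A) ==> (f t == e)) &&
     ((f t != e) ==> [&& f t \in A, f (f t) == e & #|[set u | f u == f t]| == 2])].

Definition V A := [set f | valid A f].

Lemma validP (A : {set T}) (f : {ffun T -> T}) : reflect
  ((forall t, t \notin A -> f t = e) /\
   (forall t, f t != e -> [/\ f t \in A, f (f t) = e & #|[set u | f u == f t]| = 2]))
  (valid A f).
Proof.
apply: (iffP forallP) => [H|[H1 H2] t].
  split=> t; have /andP[/implyP h1 /implyP h2] := H t.
    by move=> /h1 /eqP.
  by move=> /h2 /and3P[-> /eqP -> /eqP ->].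
apply/andP; split; apply/implyP; first by move=> /H1 ->.
by move=> /H2 [-> -> ->]; rewrite !eqxx.
Qed.

Definition upd (f : {ffun T -> T}) (a b w : T) : {ffun T -> T} :=
  [ffun t => if (t == a) || (t == b) then w else f t].

Lemma two_set (F : {set T}) a b : a \in F -> b \in F -> a != b -> #|F| = 2 ->
  F = [set a; b].
Proof.
move=> aF bF ab cF; apply/eqP; rewrite eq_sym eqEcard cF cards2 ab /= leqnn andbT.
by apply/subsetP => u; rewrite !inE => /orP[] /eqP ->.
Qed.


Lemma gl_card (A : {set T}) (a b c : T) : e \notin A -> a \in A -> b \in A -> c \in A ->
  a != b -> a != c -> b != c ->
  #|[set f in V A | (f a == c) && (f b == c)]| = #|V (A :\: [set a; b; c])|.
Proof.
move=> eA aA bA cA ab ac bc.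
set B := A :\: [set a; b; c].
have BA : B \subset A by apply: subsetDl.
have aB : a \notin B by rewrite !inE eqxx.
have bB : b \notin B by rewrite !inE eqxx orbT.
have cB : c \notin B by rewrite !inE eqxx !orbT.
have ce : c != e by apply: contraNneq eA => <-.
have inj : {in V B &, injective (fun f => upd f a b c)}.
  move=> f1 f2; rewrite !inE => /validP[h1 _] /validP[h2 _] E.
  apply/ffunP => t; have := congr1 (fun g : {ffun T -> T} => g t) E.
  rewrite /= !ffunE; case: ifP => // /orP[] /eqP ->.
    by rewrite h1 ?h2.
  by rewrite h1 ?h2.
rewrite -(card_in_imset inj); apply: eq_card => f.
rewrite !inE; apply/andP/imsetP.
- case=> /validP[v1 v2] /andP[/eqP fa /eqP fb].
  have [cA' fc fibc2] : [/\ c \in A, f c = e & #|[set u | f u == c]| = 2].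
    by have := v2 a; rewrite fa; apply.
  have fibc : [set u | f u == c] = [set a; b].
    by apply: two_set; rewrite ?inE ?fa ?fb.
  exists (upd f a b e).
    rewrite inE; apply/validP; split.
      move=> t; rewrite ffunE; case: ifP => // /norP[ta tb].
      case: (eqVneq t c) => [-> _ //| tc].
      by rewrite /B !inE (negbTE ta) (negbTE tb) (negbTE tc) /= => tA; exact: v1.
    move=> t; rewrite ffunE; case: ifP => [_|/norP[ta tb] fte]; first by rewrite eqxx.
    have [ftA fft fib] := v2 t fte.
    have fta : f t != a by apply: contraNneq ce => h; rewrite -fa -h fft.
    have ftb : f t != b by apply: contraNneq ce => h; rewrite -fb -h fft.
    have ftc : f t != c.
      apply/negP => /eqP h; have : t \in [set u | f u == c] by rewrite inE h.
      by rewrite fibc !inE (negbTE ta) (negbTE tb).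
    split.
    - by rewrite /B !inE ftA (negbTE fta) (negbTE ftb) (negbTE ftc).
    - by rewrite ffunE (negbTE fta) (negbTE ftb).
    - rewrite -fib; apply: eq_card => u; rewrite !inE ffunE.
      case: ifP => // /orP[] /eqP ->.
        by rewrite fa eq_sym (negbTE fte) eq_sym (negbTE ftc).
      by rewrite fb eq_sym (negbTE fte) eq_sym (negbTE ftc).
  apply/ffunP => t; rewrite /upd !ffunE; case: ifP => [/orP[] /eqP -> | h ]; by rewrite ?fa ?fb ?h.
- case=> f' /[!inE] /validP[v1 v2] ->.
  have f'a : f' a = e by apply: v1.
  have f'b : f' b = e by apply: v1.
  have f'c : f' c = e by apply: v1.
  have nopt : forall u w, w \notin B -> w != e -> f' u != w.
    move=> u w wB we; apply/eqP => h.
    have := v2 u; rewrite h => /(_ we) [wB' _ _].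
    by rewrite wB' in wB.
  have ee : e \notin B by apply: contra eA; apply: (subsetP BA).
  split; last by rewrite /upd !ffunE !eqxx ?orbT /= eqxx.
  apply/validP; split.
    move=> t tA; rewrite ffunE.
    have -> : (t == a) || (t == b) = false.
      by apply/negbTE/norP; split; apply: contraNneq tA => ->.
    by apply: v1; apply: contra tA; apply: (subsetP BA).
  move=> t; rewrite ffunE; case: ifP => [tab _|/norP[ta tb] fte].
    have fibc : [set u | upd f' a b c u == c] = [set a; b].
      apply/setP => u; rewrite !inE ffunE.
      by case: ifP => _; rewrite ?eqxx // (negbTE (nopt _ _ cB ce)).
    split => //; first by rewrite ffunE (eq_sym c a) (eq_sym c b) (negbTE ac) (negbTE bc) /= f'c.
    by rewrite fibc cards2 ab.
  have [ftB fft fib] := v2 t fte.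
  have fta : f' t != a by apply: contraNneq aB => <-.
  have ftb : f' t != b by apply: contraNneq bB => <-.
  split.
  - exact: (subsetP BA).
  - by rewrite ffunE (negbTE fta) (negbTE ftb).
  - rewrite -fib; apply: eq_card => u; rewrite !inE ffunE.
    case: ifP => // /orP[] /eqP ->.
      by rewrite f'a (eq_sym e) (negbTE fte); apply/negbTE; apply: contraNneq cB => ->.
    by rewrite f'b (eq_sym e) (negbTE fte); apply/negbTE; apply: contraNneq cB => ->.
Qed.

Lemma sum_bool_card (U : finType) (A : {set U}) (P : pred U) :
  \sum_(i in A) (P i : nat) = #|[set i in A | P i]|.
Proof.
rewrite -sum1_card big_mkcond [RHS]big_mkcond /=; apply: eq_bigr => i _.
by rewrite inE; case: (i \in A); case: (P i).
Qed.

Lemma fib2 (F : {set T}) u : #|F| = 2 -> u \in F -> exists v, v != u /\ F = [set u; v].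
Proof.
move=> /eqP /cards2P [a [b [ab ->]]]; rewrite !inE => /orP[] /eqP ->.
  by exists b; rewrite eq_sym.
by exists a; rewrite setUC.
Qed.

Lemma V0_eq (A : {set T}) x : e \notin A -> x \in A ->
  [set f in V A | (f x == e) && [forall t, f t != x]] = V (A :\ x).
Proof.
move=> eA xA; apply/setP => f; rewrite !inE; apply/andP/validP.
- case=> /validP[v1 v2] /andP[/eqP fx /forallP nx]; split.
    move=> t; rewrite !inE negb_and negbK => /orP[/eqP -> //|]; exact: v1.
  move=> t fte; have [ftA fft fib] := v2 t fte.
  by split => //; rewrite !inE ftA nx.
- case=> v1 v2.
  have xe : x != e by apply: contraNneq eA => <-.
  split; last first.
    rewrite v1 ?eqxx /=; last by rewrite !inE eqxx.
    apply/forallP => t; have [->|fte] := eqVneq (f t) e; first by rewrite eq_sym.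
    have [ftA _ _] := v2 t fte; apply: contraTneq ftA => ->; by rewrite !inE eqxx.
  apply/validP; split.
    by move=> t tA; apply: v1; rewrite !inE negb_and tA orbT.
  move=> t fte; have [ftA fft fib] := v2 t fte.
  by split => //; move: ftA; rewrite !inE => /andP[].
Qed.

Lemma V_set0 : #|V set0| = 1.
Proof.
suff -> : V set0 = [set [ffun _ => e]] by rewrite cards1.
apply/setP => f; rewrite !inE; apply/validP/eqP.
- case=> v1 _; apply/ffunP => t; rewrite ffunE; apply: v1; by rewrite inE.
- move=> ->; split=> [t _|t]; rewrite ffunE //; by rewrite eqxx.
Qed.

Section Rec.
Variables (A : {set T}) (x : T).
Hypotheses (eA : e \notin A) (xA : x \in A).
Let A' := A :\ x.
Definition Pr := [set p : T * T | (p.1 \in A') && (p.2 \in A' :\ p.1)].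
Definition c1 (f : {ffun T -> T}) (p : T * T) := (f p.1 == x) && (f p.2 == x).
Definition c2 (f : {ffun T -> T}) (p : T * T) := (f x == p.1) && (f p.2 == p.1).

Lemma per_f f : f \in V A ->
  2 = 2 * ((f x == e) && [forall t, f t != x]) + #|[set p in Pr | c1 f p]|
       + 2 * #|[set p in Pr | c2 f p]|.
Proof.
rewrite inE => /validP[v1 v2].
have xe : x != e by apply: contraNneq eA => <-.
have inA : forall u, f u != e -> u \in A.
  by move=> u fu; apply/negPn/negP => uA; rewrite (v1 _ uA) eqxx in fu.
have [fxe|fxe] := eqVneq (f x) e.
- have E2 : [set p in Pr | c2 f p] = set0.
    apply/setP => p; rewrite !inE /c2 fxe; case: (eqVneq e p.1) => [<-|_];
      by rewrite ?(negbTE eA) ?andbF.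

  rewrite E2 cards0 muln0 addn0 /=.
  case: forallP => [nx|/forallP]; rewrite ?muln1 ?muln0.
  + suff -> : [set p in Pr | c1 f p] = set0 by rewrite cards0.
    by apply/setP => p; rewrite !inE /c1 (negbTE (nx p.1)) !andbF.
  + rewrite negb_forall => /existsP[t]; rewrite negbK => /eqP ft.
    have := v2 t; rewrite ft => /(_ xe) [_ _ fib].
    have tF : t \in [set u | f u == x] by rewrite inE ft.
    have [v [vt Fe]] := fib2 fib tF.
    have inA' : forall u, f u = x -> (u != x) && (u \in A).
      move=> u fu; rewrite inA ?fu // andbT.
      by apply: contraNneq xe => ux; rewrite -fu ux fxe.
    have : v \in [set u | f u == x] by rewrite Fe !inE eqxx orbT.
    rewrite inE => /eqP fv.
    have E1 : [set p in Pr | c1 f p] = [set (t, v); (v, t)].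
      apply/setP => [[a b]]; rewrite !inE /c1 /Pr ?inE /= /A' ?inE; apply/idP/idP.
      - case/and3P => /and4P[_ ba _ _] fa fb; move: ba.
        have : a \in [set t; v] by rewrite -Fe inE fa.
        have : b \in [set t; v] by rewrite -Fe inE fb.
        rewrite !inE => /orP[]/eqP-> /orP[]/eqP->; by rewrite ?eqxx ?orbT.
      - case/orP => /eqP[-> ->]; rewrite (inA' t ft) (inA' v fv) ft fv eqxx /= !andbT //.
        by rewrite eq_sym.
    by rewrite E1 cards2 add0n xpair_eqE eq_sym (negbTE vt).
- have [fxA ffx fib] := v2 x fxe.
  set y := f x in fxA ffx fib *.
  have xF : x \in [set u | f u == y] by rewrite inE.
  have [z [zx Fe]] := fib2 fib xF.
  have : z \in [set u | f u == y] by rewrite Fe !inE eqxx orbT.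
  rewrite inE => /eqP fz.
  have ye : y != e by [].
  have yx : y != x by apply: contraNneq fxe => yx; rewrite -ffx yx.
  have zy : z != y by apply/eqP => zy; move: fz; rewrite zy ffx => ey; rewrite -ey eqxx in ye.
  have zA : z \in A by apply: inA; rewrite fz.
  have E1 : [set p in Pr | c1 f p] = set0.
    apply/setP => p; rewrite !inE /c1; case: (eqVneq (f p.1) x) => h; rewrite ?andbF //.
    have := v2 p.1; rewrite h => /(_ xe) [_ fx0 _].
    by move: fxe; rewrite fx0 eqxx.
  have E2 : [set p in Pr | c2 f p] = [set (y, z)].
    apply/setP => [[a b]]; rewrite !inE /c2 /Pr ?inE /= /A' ?inE; apply/idP/idP.
    - case/and3P => /and4P[_ _ bx _] /eqP ya; rewrite -ya => fb.
      have : b \in [set u | f u == y] by rewrite inE.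
      by rewrite Fe !inE (negbTE bx) /= => /eqP ->.
    - by move/eqP => [-> ->]; rewrite yx fxA zy zx zA fz !eqxx.
  by rewrite E1 E2 cards0 cards1.
Qed.

Lemma Pr_mem p : p \in Pr ->
  [/\ p.1 \in A, p.2 \in A, p.1 != p.2, p.1 != x & p.2 != x].
Proof.
rewrite /Pr /A' !inE => /andP[/andP[h1 h2] /and3P[h3 h4 h5]].
by rewrite eq_sym.
Qed.

Lemma V_rec : 2 * #|V A| = 2 * #|V A'| +
  \sum_(p in Pr) (#|V (A :\: [set p.1; p.2; x])| + 2 * #|V (A :\: [set x; p.2; p.1])|).
Proof.
have -> : 2 * #|V A| = \sum_(f in V A) 2 by rewrite sum_nat_const mulnC.
rewrite (eq_bigr (fun f : {ffun T -> T} => 2 * ((f x == e) && [forall t, f t != x]) + #|[set p in Pr | c1 f p]|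
       + 2 * #|[set p in Pr | c2 f p]|)); last by move=> f fV; exact: per_f.
rewrite big_split /= big_split /= -!big_distrr /= -addnA; congr (_ + _).
  by rewrite sum_bool_card V0_eq.
rewrite big_split /= -big_distrr /=.
have H1 : forall (c : {ffun T -> T} -> T * T -> bool),
   \sum_(f in V A) #|[set p in Pr | c f p]| = \sum_(p in Pr) #|[set f in V A | c f p]|.
  move=> c; under eq_bigr => f _ do rewrite -sum_bool_card.
  rewrite exchange_big /=; apply: eq_bigr => p _; exact: sum_bool_card.
rewrite !H1; congr (_ + 2 * _); apply: eq_bigr => p /Pr_mem[p1 p2 d12 d1x d2x].
  by rewrite gl_card.
rewrite gl_card // eq_sym //.
Qed.
End Rec.

Lemma card3D (A : {set T}) a b c : a \in A -> b \in A -> c \in A ->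
  a != b -> a != c -> b != c -> #|A :\: [set a; b; c]| = #|A| - 3.
Proof.
move=> aA bA cA ab ac bc.
have -> : A :\: [set a; b; c] = ((A :\ a) :\ b) :\ c.
  by apply/setP => u; rewrite !inE; case: (u == a); case: (u == b); case: (u == c).
have h1 := cardsD1 a A. have h2 := cardsD1 b (A :\ a). have h3 := cardsD1 c (A :\ a :\ b).
rewrite aA in h1; rewrite !inE eq_sym ab bA in h2; rewrite !inE (eq_sym c a) (eq_sym c b) ac bc cA in h3.
simpl in *. lia.
Qed.

Lemma card_Pr (A : {set T}) x : #|Pr A x| = #|A :\ x| * (#|A :\ x| - 1).
Proof.
rewrite -sum1_card /Pr.
rewrite (eq_bigl (fun p : T * T => (p.1 \in A :\ x) && (p.2 \in (A :\ x) :\ p.1))); last first.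
  by move=> p; rewrite inE.
rewrite -(pair_big_dep (fun y => y \in A :\ x) (fun y z => z \in (A :\ x) :\ y) (fun _ _ => 1)) /=.
rewrite (eq_bigr (fun _ => #|A :\ x| - 1)) ?sum_nat_const //.
move=> y yA; rewrite sum1_card; have := cardsD1 y (A :\ x); rewrite yA /=; lia.
Qed.

Theorem countV m : forall A : {set T}, e \notin A -> #|A| = m -> #|V A| = Ssum m.
Proof.
elim/ltn_ind: m => m IH A eA cA.
case: m IH cA => [|k] IH cA.
  by rewrite (cards0_eq cA) V_set0 /Ssum big_nat1 b_k0.
have : A != set0 by rewrite -cards_eq0 cA.
case/set0Pn => x xA.
have cA' : #|A :\ x| = k by have := cardsD1 x A; rewrite xA cA /=; lia.
have := V_rec eA xA.
have IHx : #|V (A :\ x)| = Ssum k.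
  by apply: IH => //; apply: contra eA; rewrite inE => /andP[].
rewrite IHx.
rewrite (eq_bigr (fun _ => 3 * Ssum (k - 2))); last first.
  move=> p /Pr_mem [p1 p2 d12 d1x d2x].
  have e1 : x != p.1 by rewrite eq_sym.
  have e2 : x != p.2 by rewrite eq_sym.
  have e3 : p.2 != p.1 by rewrite eq_sym.
  rewrite !(IH (k - 2)) //; try lia.
  - by apply: contra eA; rewrite inE => /andP[].
  - by rewrite card3D // cA; lia.
  - by apply: contra eA; rewrite inE => /andP[].
  - by rewrite card3D // cA; lia.
rewrite sum_nat_const card_Pr cA' S_rec => H.
case: k cA' H {IH cA IHx} => [|[|k]] cA' H.
- by rewrite /= !bin_small // in H *; lia.
- rewrite bin_small //; lia.
- have := bin2_mul2 k; nia.
Qed.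
End Gen.

Section Sys.
Variable X : finType.
Notation ST := ({set X} * {set X})%type.

Definition psi (P : {set {set X}}) (f : {ffun {set X} -> {set X}}) : {set ST} :=
  [set (S, f S) | S in P].

Lemma mem_psi P f p : (p \in psi P f) = (p.1 \in P) && (p.2 == f p.1).
Proof.
apply/imsetP/andP => [[S SP ->]|[h1 /eqP h2]] /=; first by rewrite SP eqxx.
by exists p.1 => //; rewrite -h2; case: p {h1 h2}.
Qed.

Lemma PL2P (Sys : {set ST}) : PL2 Sys -> forall p q, p \in Sys -> q \in Sys -> p.1 = q.1 -> p = q.
Proof.
move=> /forallP H p q pS qS e1; apply/eqP; apply/negPn/negP => pq.
have := H p; rewrite pS /= => /forallP /(_ q); rewrite qS pq /= e1 eqxx //.
Qed.

Lemma PL3P (Sys : {set ST}) : PL3 Sys -> forall p, p \in Sys -> p.2 != set0 ->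
  (p.2, set0) \in Sys /\ #|[set q in Sys | (q != p) && (q.2 == p.2)]| = 1.
Proof.
move=> /forallP H p pS p2; have := H p; rewrite pS p2 /= => /andP[-> /eqP ->]; by [].
Qed.

Lemma psi_inj P : {in V set0 P &, injective (psi P)}.
Proof.
move=> f1 f2; rewrite !inE => /validP[v1 _] /validP[w1 _] E.
apply/ffunP => S; case: (boolP (S \in P)) => SP; last by rewrite v1 ?w1.
have : (S, f1 S) \in psi P f2 by rewrite -E mem_psi /= SP eqxx.
by rewrite mem_psi /= => /andP[_ /eqP].
Qed.

Definition firsts (Sys : {set ST}) := [set p.1 | p in Sys].

Lemma firsts_psi P f : firsts (psi P f) = P.
Proof.
apply/setP => S; apply/imsetP/idP => [[p] |SP].
  by rewrite mem_psi => /andP[h _] ->.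
by exists (S, f S) => //; rewrite mem_psi /= SP eqxx.
Qed.


Lemma psi_polestar P f : partition P [set: X] -> f \in V set0 P -> polestar_system (psi P f).
Proof.
move=> hP; rewrite inE => /validP[v1 v2].
have s0P : set0 \notin P by rewrite (partition0 hP).
have trP := partition_trivIset hP.
have inP : forall u, f u != set0 -> u \in P.
  by move=> u fu; apply/negPn/negP => uA; rewrite (v1 _ uA) eqxx in fu.
have fneq : forall u, f u != set0 -> f u != u.
  move=> u fu; have [_ ffu _] := v2 u fu; apply: contraNneq fu => h.
  by move: ffu; rewrite !h => ->.
apply/and4P; split.
- apply/forallP => p; apply/implyP; rewrite mem_psi => /andP[p1 /eqP p2].
  rewrite (partition_neq0 hP p1) /= p2.
  have [->|fe] := eqVneq (f p.1) set0; first by by rewrite -setI_eq0 setI0.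
  have [fP _ _] := v2 _ fe.
  by move/trivIsetP: trP => /(_ _ _ p1 fP); rewrite eq_sym fneq // => /(_ isT).
- by rewrite /PL1 -/(firsts _) firsts_psi.
- apply/forallP => p; apply/implyP => pS; apply/forallP => q; apply/implyP => qS.
  apply/implyP; apply: contraNneq => e1; move: pS qS; rewrite !mem_psi => /andP[_ /eqP h1] /andP[_ /eqP h2].
  by case: p q e1 h1 h2 => [a b] [c d] /= <- -> ->.
- apply/forallP => [[a b]]; apply/implyP => pS; apply/implyP => /= p2.
  move: (pS); rewrite mem_psi /= => /andP[aP /eqP eb]; subst b.
  have [fP ffp fib] := v2 _ p2.
  have aF : a \in [set u | f u == f a] by rewrite inE.
  have [v [va Fe]] := fib2 fib aF.
  have : v \in [set u | f u == f a] by rewrite Fe !inE eqxx orbT.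
  rewrite inE => /eqP fv.
  have vP : v \in P by apply: inP; rewrite fv.
  rewrite mem_psi /= fP ffp eqxx /=.
  have -> : [set q in psi P f | (q != (a, f a)) && (q.2 == f a)] = [set (v, f v)].
    apply/setP => [[c d]]; rewrite !inE mem_psi /=; apply/idP/idP.
    + case/and3P => /andP[cP /eqP ->] ne /eqP fc.
      have : c \in [set u | f u == f a] by rewrite inE fc.
      rewrite Fe !inE => /orP[/eqP ca|/eqP ->]; last by rewrite eqxx.
      by move: ne; rewrite ca eqxx.
    + by move/eqP => [-> ->]; rewrite vP fv !eqxx andbT /= xpair_eqE (negbTE va).
  by rewrite cards1.
Qed.

Definition phi (Sys : {set ST}) : {ffun {set X} -> {set X}} :=
  [ffun S => if [pick p in Sys | p.1 == S] is Some p then p.2 else set0].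

Lemma phi_polestar Sys : polestar_system Sys ->
  phi Sys \in V set0 (firsts Sys) /\ psi (firsts Sys) (phi Sys) = Sys.
Proof.
case/and4P => _ _ /PL2P H2 /PL3P H3.
set f := phi Sys; set P := firsts Sys.
have F1 : forall p, p \in Sys -> f p.1 = p.2.
  move=> p pS; rewrite /f /phi ffunE; case: pickP => [q /andP[qS /eqP e1]|].
    by rewrite (H2 _ _ qS pS e1).
  by move=> /(_ p); rewrite pS eqxx.
have F2 : forall S, S \notin P -> f S = set0.
  move=> S SP; rewrite /f /phi ffunE; case: pickP => [q /andP[qS /eqP e1]|//].
  by move: SP; rewrite -e1 /P /firsts imset_f.
have F3 : forall S, S \in P -> exists2 p, p \in Sys & p.1 = S.
  by move=> S /imsetP[p pS ->]; exists p.
split; last first.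
  apply/setP => p; rewrite mem_psi; apply/andP/idP => [[/F3[q qS e1] /eqP e2]|pS].
    rewrite -e1 (F1 _ qS) in e2.
    suff -> : p = q by [].
    by case: p q e1 e2 {qS} => [a b] [c d] /= -> ->.
  by rewrite (F1 _ pS) eqxx /P /firsts imset_f.
rewrite inE; apply/validP; split; first exact: F2.
move=> S fS.
have SP : S \in P by apply/negPn/negP => /F2 h; rewrite h eqxx in fS.
have [p pS e1] := F3 _ SP.
have fSe : f S = p.2 by rewrite -e1 F1.
rewrite fSe in fS *.
have [p2S c1] := H3 _ pS fS.
split.
- by rewrite /P /firsts (imset_f (fun q : ST => q.1) p2S).
- by rewrite (F1 _ p2S).
- have -> : [set u | f u == p.2] = (fun q : ST => q.1) @: [set q in Sys | q.2 == p.2].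
    apply/setP => u; rewrite inE; apply/eqP/imsetP => [fu|[q /[!inE] /andP[qS /eqP q2] ->]].
      have uP : u \in P by apply/negPn/negP => /F2 h; rewrite -fu h eqxx in fS.
      have [q qS e2] := F3 _ uP.
      by exists q => //; rewrite inE qS /= -e2 F1 // in fu *; rewrite fu eqxx.
    by rewrite F1.
  rewrite card_in_imset; last first.
    by move=> q r /[!inE] /andP[qS _] /andP[rS _]; apply: H2.
  rewrite (cardsD1 p) inE pS eqxx /=; congr (_ + _).
  rewrite -c1; apply: eq_card => q; rewrite !inE.
  by case: (q == p); case: (q \in Sys).
Qed.
End Sys.

Definition parts (U : finType) k :=
  [set P : {set {set U}} | partition P [set: U] && (#|P| == k)].

Lemma parts_le (U W : finType) (h : U -> W) k : injective h -> #|U| = #|W| ->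
  #|parts U k| <= #|parts W k|.
Proof.
move=> hi cUW.
have hT : h @: [set: U] = [set: W].
  by apply/eqP; rewrite eqEcard subsetT /= card_imset // !cardsT cUW.
rewrite -(card_imset (parts U k) (imset_inj (imset_inj hi))); apply: subset_leq_card.
apply/subsetP => Q /imsetP[P]; rewrite !inE => /andP[pP cP] ->.
by rewrite -hT imset_partition // pP /= card_imset //; exact: imset_inj.
Qed.

Lemma parts_alpha (X : finType) k : #|parts X k| = alpha #|X| k.
Proof.
apply/eqP; rewrite eqn_leq.
rewrite (parts_le k (@enum_rank_inj X)) ?card_ord //=.
by apply: (parts_le k (@enum_val_inj _ X)); rewrite card_ord.
Qed.

Lemma num_sum (X : finType) :
  num_polestar X = \sum_(P : {set {set X}} | partition P [set: X]) Ssum #|P|.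
Proof.
rewrite /num_polestar -sum1_card.
rewrite (partition_big (fun Sys => firsts Sys) (fun P => partition P [set: X])); last first.
  by move=> Sys; rewrite inE => /and4P[].
apply: eq_bigr => P hP.
rewrite sum1dep_card.
have -> : [set x | (x \in [set Sys | polestar_system Sys]) && (firsts x == P)]
    = psi P @: V set0 P.
  apply/setP => Sys; rewrite !inE; apply/andP/imsetP.
  - case=> ps /eqP <-; have [fV fS] := phi_polestar ps.
    by exists (phi Sys).
  - case=> f fV ->; split; first exact: psi_polestar.
    by rewrite firsts_psi.
rewrite card_in_imset; last exact: psi_inj.
by apply: countV => //; rewrite (partition0 hP).
Qed.

Lemma delta (F : nat -> nat) i N : i < N -> \sum_(0 <= k < N) (i == k) * F k = F i.
Proof.
elim: N => // N IH; rewrite ltnS leq_eqVlt => /orP[/eqP ->|h].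
  rewrite big_nat_recr //= eqxx mul1n big_nat_cond big1 ?add0n //.
  by move=> k /andP[/andP[_ h] _]; rewrite eq_sym (ltn_eqF h).
rewrite big_nat_recr //= IH // (ltn_eqF h) mul0n addn0 //.
Qed.

Lemma card_part_le (X : finType) (P : {set {set X}}) : partition P [set: X] -> #|P| <= #|X|.
Proof.
move=> hP; rewrite -cardsT (card_partition hP) -sum1_card; apply: leq_sum => A AP.
by rewrite card_gt0 (partition_neq0 hP AP).
Qed.

Lemma parts0 (X : finType) : 0 < #|X| -> #|parts X 0| = 0.
Proof.
move=> h; apply/eqP; rewrite cards_eq0; apply/eqP/setP => P; rewrite !inE.
apply/negbTE/negP => /andP[pP /eqP c0].
have := card_partition pP; rewrite (cards0_eq c0) big_set0 cardsT; lia.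
Qed.

Theorem mainTheorem10 (X : finType) (n : nat) :
  #|X| = n -> 1 <= n ->
  num_polestar X =
    \sum_(1 <= k < n.+1) alpha n k * (\sum_(0 <= l < (k %/ 3).+1) beta k l * 3 ^ l).
Proof.
move=> <- n1.
have Sb : forall k, \sum_(0 <= l < (k %/ 3).+1) beta k l * 3 ^ l = Ssum k.
  move=> k; rewrite /Ssum big_nat_cond [RHS]big_nat_cond; apply: eq_bigr => l /andP[/andP[_ hl] _].
  rewrite /beta beta_b //.
  have : l * 3 <= k by rewrite -leq_divRL.
  lia.
under eq_bigr => k _ do rewrite Sb.
rewrite num_sum.
rewrite (eq_bigr (fun P : {set {set X}} => \sum_(0 <= k < #|X|.+1) (#|P| == k) * Ssum k)); last first.
  by move=> P hP; rewrite delta // ltnS card_part_le.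
rewrite exchange_big /=.
have E : forall k, \sum_(P | partition P [set: X]) (#|P| == k) * Ssum k = alpha #|X| k * Ssum k.
  move=> k; rewrite -big_distrl /= -parts_alpha; congr (_ * _).
  rewrite /parts -sum1dep_card [RHS]big_mkcondr /=; apply: eq_bigr => P _.
  by case: (#|P| == k).
rewrite big_ltn // E -parts_alpha parts0 // mul0n add0n.
by apply: eq_bigr => k _; rewrite E.
Qed.
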